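(* Let $(X,f)$ be a dynamical system with a full background measure $\mu_0$, and assume $(X,f)$ satisfies TRAC 1 and TRAC 2 (with ergodic measures $\mu_1,\dots,\mu_k$). If $B$ is a visible basic set, then there exists $i$ with $|\mu_i|\subset B$; in fact $\bigcup\{Gen(\mu_i):|\mu_i|\subset B\}$ intersects the basin $G(B)$ in a dense subset of $G(B)$. In particular, if $B$ is a terminal basic set then there exists $i$ with $|\mu_i|\subset B$.
   Context: $X$ compact metric, $f$ continuous. A background measure $\mu_0$ is a complete Borel probability measure which is full, i.e. every nonempty open set has positive measure. Basic sets are the chain components of $f$ (equivalence classes of chain recurrent points under mutual reachability by $\epsilon$-chains for all $\epsilon>0$); $B$ is terminal if every point chain-reachable from a point of $B$ lies in $B$. The basin of $B$ is $G(B)=\operatorname{int}\{x:\omega f(x)\subset B\}$, where $\omega f(x)$ is the limit set of the forward orbit; $B$ is visible if $G(B)\neq\emptyset$. $Gen(\mu)$ is the set of points $x$ with $\frac1n\sum_{i<n}u(f^ix)\to\int u\,d\mu$ for all continuous $u$; $|\mu|$ is the support. TRAC 1: there are only finitely many basic sets. TRAC 2: there are finitely many ergodic invariant probability measures $\mu_1,\dots,\mu_k$ such that every point outside some $\mu_0$-null set is generic for some $\mu_i$. *)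

(* Defs.v *)
From HB Require Import structures.
From mathcomp Require Import all_boot all_order all_algebra.
From mathcomp Require Import all_classical all_reals all_analysis.
Set Implicit Arguments. Unset Strict Implicit. Unset Printing Implicit Defensive.
Import Order.TTheory GRing.Theory Num.Theory.
Import numFieldNormedType.Exports.
Local Open Scope classical_set_scope.
Local Open Scope ring_scope.

(** Pointed metric spaces (a metric space with a distinguished point; every
    space carrying a probability measure is nonempty, so this is harmless).
    The point is needed by the library's generated-sigma-algebra construction. *)
#[short(type="pmetricType")]
HB.structure Definition PMetric (K : numDomainType) :=
  { M of Pointed M & Metric K M }.

Section Dyn.
Context {R : realType} {X : pmetricType R}.

Definition borel := g_sigma_algebraType (@open X).

Definition eps_chain (f : X -> X) (eps : R) (x y : X) :=
  exists (n : nat) (c : nat -> X), c 0%N = x /\ c n.+1 = y /\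
    forall j, (j <= n)%N -> mdist (f (c j)) (c j.+1) < eps.

Definition chain_reach (f : X -> X) (x y : X) :=
  forall eps : R, 0 < eps -> eps_chain f eps x y.

Definition chain_recurrent (f : X -> X) (x : X) := chain_reach f x x.

Definition basic_set (f : X -> X) (B : set X) :=
  exists2 x, chain_recurrent f x &
    B = [set y | chain_reach f x y /\ chain_reach f y x].

Definition terminal (f : X -> X) (B : set X) :=
  forall x y, B x -> chain_reach f x y -> B y.

Definition omega_limit (f : X -> X) (x : X) : set X :=
  [set y | forall U, nbhs y U -> forall N : nat,
     exists2 n : nat, (N <= n)%N & U (iter n f x)].

Definition basin (f : X -> X) (B : set X) : set X :=
  interior [set x | omega_limit f x `<=` B].

Definition visible (f : X -> X) (B : set X) := basin f B !=set0.

Definition full_measure (mu : set borel -> \bar R) :=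
  forall U : set X, open U -> U !=set0 -> (0 < mu U)%E.

Definition msupport (mu : set borel -> \bar R) : set X :=
  [set x | forall U : set X, open U -> U x -> (0 < mu U)%E].

Definition invariant_measure (f : X -> X) (mu : set borel -> \bar R) :=
  forall A : set borel, measurable A -> mu (f @^-1` A) = mu A.

Definition ergodic_measure (f : X -> X) (mu : set borel -> \bar R) :=
  forall A : set borel, measurable A -> f @^-1` A = A ->
    mu A = 0%E \/ mu A = 1%E.

Definition generic_points (f : X -> X) (mu : {measure set borel -> \bar R})
  : set X :=
  [set x | forall u : X -> R, continuous u ->
     (fun n : nat => ((n%:R)^-1 * \sum_(i < n) u (iter i f x))%:E)
       @ \oo --> (\int[mu]_(y in [set: borel]) (u y)%:E)%E].

Definition TRAC1 (f : X -> X) := finite_set [set B | basic_set f B].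

End Dyn.

(* Main.v *)
Require Import Defs.
From HB Require Import structures.
From mathcomp Require Import all_boot all_order all_algebra.
From mathcomp Require Import all_classical all_reals all_analysis.
Import Order.TTheory GRing.Theory Num.Theory.
Import numFieldNormedType.Exports.
Local Open Scope classical_set_scope.
Local Open Scope ring_scope.
From mathcomp Require Import measurable_realfun.
From mathcomp Require Import zify ring lra.
Set Implicit Arguments. Unset Strict Implicit. Unset Printing Implicit Defensive.

Section Chains.
Context {R : realType} {X : pmetricType R} (f : X -> X).

Lemma chain_mono (e1 e2 : R) x y : e1 <= e2 -> eps_chain f e1 x y -> eps_chain f e2 x y.
Proof.
move=> le [n [c [c0 [cn H]]]]; exists n, c; split => //; split => // j jn.
exact: lt_le_trans (H j jn) le.
Qed.

Lemma chain_one (e : R) x y : mdist (f x) y < e -> eps_chain f e x y.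
Proof. by move=> h; exists 0%N, (fun j => if j is 0%N then x else y); split => //; split => // -[|]. Qed.

Lemma chain_cat (e : R) x y z : eps_chain f e x y -> eps_chain f e y z -> eps_chain f e x z.
Proof.
move=> [n1 [c1 [c10 [c1n H1]]]] [n2 [c2 [c20 [c2n H2]]]].
exists (n1 + n2).+1, (fun j => if (j <= n1.+1)%N then c1 j else c2 (j - n1.+1)%N).
split; first by [].
split.
  have -> : ((n1 + n2).+2 <= n1.+1)%N = false by lia.
  have -> : ((n1 + n2).+2 - n1.+1 = n2.+1)%N by lia.
  exact: c2n.
move=> j jn.
have [jle|jgt] := leqP j n1.
  have -> : (j <= n1.+1)%N = true by lia.
  have -> : (j.+1 <= n1.+1)%N = true by lia.
  by apply: H1.
have -> : (j.+1 <= n1.+1)%N = false by lia.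
have -> : (j.+1 - n1.+1 = (j - n1.+1).+1)%N by lia.
case: (leqP j n1.+1) => j1.
  have ej : j = n1.+1 by lia.
  rewrite ej subnn c1n -c20; apply: H2; lia.
apply: H2; lia.
Qed.

Lemma chain_last (e : R) x y : eps_chain f e x y ->
  exists z, (z = x \/ eps_chain f e x z) /\ mdist (f z) y < e.
Proof.
move=> [[|n] [c [c0 [cn H]]]].
  by exists x; split; [left|rewrite -c0 -cn; apply: H].
exists (c n.+1); split; last by rewrite -cn; apply: H.
right; exists n, c; split => //; split => // j jn; apply: H; lia.
Qed.

Lemma chain_lastP (e : R) x y z : (z = x \/ eps_chain f e x z) -> mdist (f z) y < e ->
  eps_chain f e x y.
Proof.
move=> [->|xz] h; first exact: chain_one.
exact: chain_cat xz (chain_one h).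
Qed.

Lemma chain_open (e : R) x : open [set y | eps_chain f e x y].
Proof.
rewrite openE => y /chain_last [z [zx dz]]; rewrite /interior.
apply/nbhs_ballP; exists (e - mdist (f z) y); first by rewrite /= subr_gt0.
move=> y'; rewrite ballEmdist /= => yy'.
apply: chain_lastP zx _.
rewrite (le_lt_trans (metric_triangle _ y _)) //.
by rewrite -ltrBrDl.
Qed.

Lemma chain_orbit (e : R) a k : 0 < e -> eps_chain f e a (iter k.+1 f a).
Proof.
move=> e0; elim: k => [|k IH].
  by apply: chain_one; rewrite /= mdistxx.
apply: (@chain_lastP _ _ _ (iter k.+1 f a)); first by right.
by rewrite /= mdistxx.
Qed.

Lemma omega_ne x : compact [set: X] -> omega_limit f x !=set0.
Proof.
move=> cX.
have PF : ProperFilter ((fun n => iter n f x) @ \oo) by exact: fmap_proper_filter.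
case: (cX _ PF); first exact: filterT.
move=> p [_ cp]; exists p => U pU N.
have : ((fun n => iter n f x) @ \oo) [set z | exists2 n, (N <= n)%N & z = iter n f x].
  by exists N => // n /= Nn; exists n.
move=> FA; case: (cp _ _ FA pU) => z [[n Nn ->] Un]; by exists n.
Qed.

Lemma omega_cr x w : continuous f -> omega_limit f x w -> chain_recurrent f w.
Proof.
move=> cf wo e e0.
have /metricType_numDomainType.cvgrPdist_lt /(_ e e0) := cf w.
case/nbhs_ballP => del del0 Hdel.
have d0 : 0 < Num.min del e by rewrite lt_min del0 e0.
have bw : nbhs w (ball w (Num.min del e)) by apply: nbhsx_ballx.
case: (wo _ bw 0%N) => n _ Hn.
case: (wo _ bw n.+2) => m nm Hm.
apply: (@chain_cat _ _ (iter n.+1 f x)).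
  apply: chain_one; rewrite iterS.
  apply: Hdel; apply: le_ball Hn; rewrite ge_min lexx //.
have em : m = ((m - n.+2) + n.+1).+1 by lia.
apply: (@chain_lastP _ _ _ (iter (m - n.+2) f (iter n.+1 f x))).
  case: (m - n.+2)%N => [|k]; first by left.
  by right; apply: chain_orbit.
rewrite -iterS -iterD addSn -em metric_sym.
move: Hm; rewrite ballEmdist /= => Hm.
by apply: lt_le_trans Hm _; rewrite ge_min lexx orbT.
Qed.
End Chains.

Section Meas.
Context {R : realType} {X : pmetricType R}.

Lemma max0_lip (a b : R) : `|Order.max 0 a - Order.max 0 b| <= `|a - b|.
Proof.
have h1 := ler_norm (a - b); have h2 := ler_norm (b - a).
rewrite distrC in h2.
case: (lerP 0 a) => ha; case: (lerP 0 b) => hb.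
- by [].
- rewrite subr0 ger0_norm //; lra.
- rewrite sub0r normrN ger0_norm //; lra.
- by rewrite subrr normr0.
Qed.

Lemma mdist_lip (z y y' : X) : `|mdist z y - mdist z y'| <= mdist y y'.
Proof.
have t1 := metric_triangle z y y'; have t2 := metric_triangle z y' y.
rewrite (metric_sym y' y) in t2.
rewrite ler_norml; apply/andP; split; lra.
Qed.

Lemma lip_cont (g : X -> R) : (forall y y', `|g y - g y'| <= mdist y y') -> continuous g.
Proof.
move=> Lg y; apply/cvgrPdist_lt => e e0.
apply/nbhs_ballP; exists e => // y' /=; rewrite ballEmdist /= => h.
exact: le_lt_trans (Lg y y') h.
Qed.

Lemma cont_meas (g : X -> R) : continuous g -> measurable_fun [set: @borel R X] g.
Proof.
move=> /continuousP cg.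
apply: (measurability _ (measurable_realfun.RGenOpens.measurableE R)).
move=> _ [_ [a [b ->] <-]]; apply: measurableI => //.
apply: sub_sigma_algebra; apply: cg; exact: interval_open.
Qed.

Lemma open_meas (U : set X) : open U -> measurable (U : set (@borel R X)).
Proof. by move=> oU; apply: sub_sigma_algebra. Qed.


Lemma supp_omega (f : X -> X) (mu : probability (@borel R X) R) x :
  generic_points f mu x -> msupport mu `<=` omega_limit f x.
Proof.
move=> gx z zs U zU N.
apply: contrapT => nv.
have nU : forall n, (N <= n)%N -> ~ U (iter n f x) by move=> n Nn Un; apply: nv; exists n.
case/nbhs_ballP: zU => r r0 Hr.
pose u := fun y : X => Order.max 0 (r - mdist z y).
have cu : continuous u.
  apply: lip_cont => y y'; rewrite /u; apply: le_trans (max0_lip _ _) _.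
  have -> : (r - mdist z y) - (r - mdist z y') = mdist z y' - mdist z y by ring.
  rewrite distrC; exact: mdist_lip.
have u0 : forall n, (N <= n)%N -> u (iter n f x) = 0.
  move=> n Nn; rewrite /u max_l //.
  have : ~ ball z r (iter n f x) by move=> /Hr; apply: nU.
  rewrite ballEmdist /= => /negP; rewrite -leNgt => h; rewrite subr_le0 //.
pose S := \sum_(i < N) u (iter i f x).
have Hsum : forall n, (N <= n)%N -> \sum_(i < n) u (iter i f x) = S.
  move=> n Nn; rewrite /S -!(big_mkord xpredT (fun i => u (iter i f x))).
  rewrite (@big_cat_nat _ _ _ N 0 n _ _ (leq0n N) Nn) /=.
  rewrite [X in _ + X]big1_seq ?addr0 // => i /andP[_]; rewrite mem_index_iota => /andP[Ni _].
  exact: u0.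
have h2 : (fun n : nat => ((n%:R)^-1 * \sum_(i < n) u (iter i f x))%:E) @ \oo --> 0%:E.
  apply: cvg_trans (near_eq_cvg (f := fun n : nat => ((n%:R)^-1 * S)%:E) _) _.
    by exists N => // n /= Nn; rewrite Hsum.
  apply: cvg_EFin; first exact: nearW.
  rewrite -[X in _ --> X](mul0r S); apply: cvgMr_tmp.
  rewrite -(cvg_shiftS (fun n : nat => (n%:R)^-1 : R)); exact: cvg_harmonic.
have h1 := gx u cu.
have eq0 := cvg_unique (@ereal_hausdorff R) h1 h2.
pose E := interior (ball z (r/2)).
have r20 : 0 < r / 2 by rewrite divr_gt0.
have zE : E z by apply: nbhsx_ballx.
have muE : (0 < mu E)%E := zs E (@open_interior _ _) zE.
have mE : measurable (E : set (@borel R X)) := open_meas (@open_interior _ _).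
have : ((r/2)%:E * mu E <= \int[mu]_(y in [set: @borel R X]) (u y)%:E)%E.
  have -> : mu E = mu (E `&` setT) by rewrite setIT.
  rewrite -(integral_indic _ measurableT mE).
  rewrite -(@integralZl_indic _ _ _ mu _ measurableT (fun=> E) (r/2)) //; last first.
    by rewrite ltNge (ltW r20).
  apply: ge0_le_integral => //.
  - by move=> y _; rewrite lee_fin mulr_ge0 // ?ltW.
  - by apply/measurable_EFinP; apply: measurable_funM => //; exact: measurable_indic.
  - by apply/measurable_EFinP; exact: cont_meas.
  move=> y _; rewrite lee_fin indicE; have [yE|nyE] := pselect (E y).
    rewrite mem_set //; move: yE => /interior_subset; rewrite ballEmdist /= => yb.
    by rewrite mulr1 le_max; apply/orP; right; lra.
  by rewrite memNset // mulr0 le_max lexx.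
rewrite eq0 => H.

have : (0 < (r/2)%:E * mu E)%E by apply: mule_gt0 => //; rewrite lte_fin.
by move=> /lt_le_trans /(_ H); rewrite ltxx.
Qed.
End Meas.

Section Term.
Context {R : realType} {X : pmetricType R} (f : X -> X).

Lemma terminal_visible (B : set X) : compact [set: X] -> continuous f -> TRAC1 f ->
  basic_set f B -> terminal f B -> visible f B.
Proof.
move=> cX cf fin [b0 cb0 eB] tB.
have Bb0 : B b0 by rewrite eB.
pose F := [set B' : set X | basic_set f B'].
pose Q := fun (B' : set X) (e : R) => (forall z, B' z -> chain_reach f b0 z) \/
  (exists2 z, B' z & ~ eps_chain f e b0 z).
have HQ : forall B', \forall e \near (0:R)^'+, Q B' e.
  move=> B'; have [all|] := pselect (forall z, B' z -> chain_reach f b0 z).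
    by apply: nearW => e; left.
  move=> /existsNP [z /not_implyP [B'z nr]].
  move: nr => /existsNP [e0 /not_implyP [e00 ne0]].
  near=> e; right; exists z => // ch; apply: ne0.
  apply: chain_mono ch; near: e; exact: nbhs_right_ltW.
have Hall : \forall e \near (0:R)^'+, 0 < e /\ forall B', F B' -> Q B' e.
  apply: filterI; first exact: nbhs_right_gt.
  apply: filterS (@filter_bigI _ _ (fset_set F) (fun B' => [set e | Q B' e]) _ _ (fun B' _ => HQ B')).
  move=> e He B' FB'; apply: (He B'); rewrite /= in_fset_set //.
  by rewrite inE.
case: (filter_ex Hall) => e [e0 He].
have e20 : 0 < e / 2 by rewrite divr_gt0.
pose U := [set y | eps_chain f (e / 2) b0 y].
have oU : open U by exact: chain_open.
have Ufb : U (f b0) by apply: chain_one; rewrite mdistxx.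
have Uinv : forall x n, U x -> U (iter n f x).
  move=> x n Ux; elim: n => [|n IH] //=.
  by apply: chain_cat IH (chain_one _); rewrite mdistxx.
have UB : U `<=` [set x | omega_limit f x `<=` B].
  move=> x Ux w wo.
  have cw := @omega_cr _ _ f x w cf wo.
  pose B' := [set y | chain_reach f w y /\ chain_reach f y w].
  have FB' : F B' by exists w.
  have B'w : B' w by split.
  case: (He B' FB') => [hall|[z B'z nz]].
    exact: (tB b0 w Bb0 (hall w B'w)).
  exfalso; apply: nz.
  have bw : nbhs w (ball w (e / 2)) by apply: nbhsx_ballx.
  case: (wo _ bw 0%N) => n _; rewrite ballEmdist /= => dn.
  case: (@chain_last _ _ f _ _ _ (Uinv x n Ux)) => z' [hz' dz'].
  apply: (@chain_cat _ _ f _ _ w).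
    apply: (@chain_lastP _ _ f _ _ _ z').
      by case: hz' => [->|h]; [left|right; apply: chain_mono h; rewrite ler_pdivrMr // ler_peMr // ?ler1n // ltW].
    rewrite (le_lt_trans (metric_triangle _ (iter n f x) _)) //.
    rewrite [e](splitr e) ltrD // metric_sym //.
  by case: B'z => h _; apply: h.
exists (f b0); rewrite /basin /interior /=.
by apply: filterS UB _; apply: open_nbhs_nbhs; split.
Unshelve. all: by end_near.
Qed.
End Term.

Unset Implicit Arguments.
Set Strict Implicit.
Theorem lemma2p5 (R : realType) (X : pmetricType R) (f : X -> X)
  (mu0 : probability (@borel R X) R)
  (k : nat) (mu : 'I_k -> probability (@borel R X) R) :
  compact [set: X] ->
  continuous f ->
  full_measure mu0 ->
  TRAC1 f ->
  (forall i, invariant_measure f (mu i) /\ ergodic_measure f (mu i)) ->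
  mu0.-negligible (~` \bigcup_(i in [set: 'I_k]) generic_points f (mu i)) ->
  (forall B : set X, basic_set f B -> visible f B ->
     (exists i, msupport (mu i) `<=` B) /\
     basin f B `<=`
       closure (basin f B `&`
         \bigcup_(i in [set i | msupport (mu i) `<=` B]) generic_points f (mu i)))
  /\
  (forall B : set X, basic_set f B -> terminal f B ->
     exists i, msupport (mu i) `<=` B).
Proof.
move=> cX cf full fin _ [N [mN N0 sN]].
have dense : forall B : set X, forall x, basin f B x -> forall W, nbhs x W ->
    exists y, W y /\ basin f B y /\ exists2 i, msupport (mu i) `<=` B & generic_points f (mu i) y.
  move=> B x bx W xW.
  pose W' := interior W `&` basin f B.
  have oW' : open W' by apply: openI; exact: open_interior.
  have W'x : W' x by split.
  have pos : (0 < mu0 W')%E by apply: full => //; exists x.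
  have [y [W'y Gy]] : exists y, W' y /\ (\bigcup_(i in [set: 'I_k]) generic_points f (mu i)) y.
    apply: contrapT => hn.
    have sub : W' `<=` N.
      by move=> y W'y; apply: sN => Gy; apply: hn; exists y.
    have : (mu0 W' <= mu0 N)%E.
      by apply: le_measure => //; rewrite inE //; exact: open_meas.
    by rewrite N0 => /(lt_le_trans pos); rewrite ltxx.
  case: Gy => i _ Giy.
  exists y; split; first by case: W'y => /interior_subset.
  split; first by case: W'y.
  exists i => //.
  move=> z zs; have oy := @supp_omega _ _ f (mu i) y Giy z zs.
  by case: W'y => _ /interior_subset; apply.
have partA : forall B : set X, basic_set f B -> visible f B ->
     (exists i, msupport (mu i) `<=` B) /\
     basin f B `<=`
       closure (basin f B `&`
         \bigcup_(i in [set i | msupport (mu i) `<=` B]) generic_points f (mu i)).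
  move=> B _ [x bx]; split.
    by case: (dense B x bx setT filterT) => y [_ [_ [i ? _]]]; exists i.
  move=> z bz W zW.
  case: (dense B z bz W zW) => y [Wy [by_ [i si Gi]]].
  by exists y; split => //; split => //; exists i.
split => //.
move=> B bB tB.
by case: (partA B bB (terminal_visible cX cf fin bB tB)).
Qed.
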